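(* Let $(\beta,\gamma)$ be antiferromagnetic and $\lambda>0$. Suppose $\mathcal{T}_1,\dots,\mathcal{T}_k$ are rooted trees with roots $\rho_1,\dots,\rho_k$, effective fields $R_1,\dots,R_k$ and magnetization gaps $M_1,\dots,M_k$. Let $\mathcal{T}$ be the tree with root $\rho$, consisting of an edge $\{\rho,u\}$ together with $\mathcal{T}_1,\dots,\mathcal{T}_k$, where the roots $\rho_1,\dots,\rho_k$ are all identified with $u$. Let $R,M$ be the effective field and magnetization gap of $\mathcal{T}$. Then $$R=\frac{1+\gamma\lambda\prod_{i=1}^kR_i}{\beta+\lambda\prod_{i=1}^kR_i},\qquad M=1-\omega(R)\Big(1+\sum_{i=1}^k(M_i-1)\Big),\qquad\text{where }\ \omega(R):=\frac{1+\beta\gamma-\beta R-\gamma/R}{1-\beta\gamma}.$$ Moreover $R\in(\gamma,1/\beta)$ and $0<\omega(R)<1$.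
   Context: A pair $(\beta,\gamma)$ with $\beta,\gamma\geq0$ is antiferromagnetic if $\beta\gamma\in[0,1)$ and at least one is nonzero. For a graph $G=(V,E)$ and $\lambda>0$, $\mu_{G;\beta,\gamma,\lambda}(\sigma)=\lambda^{|\sigma|}\beta^{m_0(\sigma)}\gamma^{m_1(\sigma)}/Z$ for $\sigma:V\to\{0,1\}$, $|\sigma|=\sum_v\sigma(v)$, $m_0,m_1$ the numbers of edges with both endpoints spin $0$, resp. spin $1$, convention $0^0=1$. For a rooted tree $\mathcal{T}$ with root $\rho$ and $\mu=\mu_{\mathcal{T};\beta,\gamma,\lambda}$, the effective field is $R_{\mathcal{T}}=\frac{1}{\lambda}\frac{\mu(\sigma(\rho)=1)}{\mu(\sigma(\rho)=0)}$ and the magnetization gap is $M_{\mathcal{T}}=\mathbf{E}_\mu[|\sigma|\mid\sigma(\rho)=1]-\mathbf{E}_\mu[|\sigma|\mid\sigma(\rho)=0]$ (counting all vertices including the root). When $\beta=0$, $1/\beta$ is interpreted as $+\infty$. *)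

(* Defs.v *)
From HB Require Import structures.
From mathcomp Require Import all_boot all_order all_algebra.
Set Implicit Arguments. Unset Strict Implicit. Unset Printing Implicit Defensive.
Import Order.TTheory GRing.Theory Num.Theory.
Local Open Scope ring_scope.

Inductive rtree : Type := Node of seq rtree.

Definition children (t : rtree) : seq rtree := let: Node cs := t in cs.

Fixpoint tsize (t : rtree) : nat :=
  let: Node cs := t in (sumn (map tsize cs)).+1.

(* Vertices are numbered 0 .. tsize t - 1 in preorder; the root is 0.
   Edge list (parent, child) of the tree. *)
Fixpoint tedges (t : rtree) : seq (nat * nat) :=
  let: Node cs := t in
  let fix go (cs : seq rtree) (off : nat) : seq (nat * nat) :=
    match cs with
    | [::] => [::]
    | c :: cs' =>
        (0%N, off) :: map (fun e => (e.1 + off, e.2 + off)%N) (tedges c)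
                   ++ go cs' (off + tsize c)%N
    end in
  go cs 1%N.

Section Gibbs.
Variable R : realFieldType.
Variables (beta gamma lam : R).

Definition antiferro : Prop :=
  0 <= beta /\ 0 <= gamma /\ beta * gamma < 1 /\ (beta != 0 \/ gamma != 0).

Variable t : rtree.
Notation n := (tsize t).
Notation conf := (n.-tuple bool).

Definition spin (s : conf) (i : nat) : bool := nth false s i.

Definition nspins (s : conf) : nat := count id s.
Definition m0 (s : conf) : nat :=
  count (fun e : nat * nat => ~~ spin s e.1 && ~~ spin s e.2) (tedges t).
Definition m1 (s : conf) : nat :=
  count (fun e : nat * nat => spin s e.1 && spin s e.2) (tedges t).

Definition gweight (s : conf) : R :=
  lam ^+ nspins s * beta ^+ m0 s * gamma ^+ m1 s.

Definition Zpart : R := \sum_(s : conf) gweight s.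

Definition gibbs (s : conf) : R := gweight s / Zpart.

Definition root_prob (b : bool) : R :=
  \sum_(s : conf | spin s 0 == b) gibbs s.

Definition cond_mag (b : bool) : R :=
  (\sum_(s : conf | spin s 0 == b) (nspins s)%:R * gibbs s) / root_prob b.

Definition eff_field : R := lam^-1 * (root_prob true / root_prob false).

Definition mag_gap : R := cond_mag true - cond_mag false.

End Gibbs.

Definition omega (R : realFieldType) (beta gamma x : R) : R :=
  (1 + beta * gamma - beta * x - gamma / x) / (1 - beta * gamma).

(* Main.v *)
Require Import Defs.
From HB Require Import structures.
From mathcomp Require Import all_boot all_order all_algebra zify ring lra.
Import Order.TTheory GRing.Theory Num.Theory.
Import Defs.
Local Open Scope ring_scope.
Set Implicit Arguments. Unset Strict Implicit. Unset Printing Implicit Defensive.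
Lemma sumT_cons (R : nmodType) n (F : seq bool -> R) :
  \sum_(s : n.+1.-tuple bool) F s = \sum_(b : bool) \sum_(s : n.-tuple bool) F (b :: s).
Proof.
rewrite pair_big /=.
rewrite (reindex (fun p : bool * n.-tuple bool => [tuple of p.1 :: p.2])) /=.
  by [].
exists (fun s : n.+1.-tuple bool => (thead s, [tuple of behead s])).
  by move=> [b s] _ /=; congr pair; apply: val_inj.
move=> s _; apply: val_inj => /=.
by case: s => [[|x s] //=].
Qed.

Lemma sumT0 (R : nmodType) (F : seq bool -> R) :
  \sum_(s : 0.-tuple bool) F s = F [::].
Proof.
rewrite (big_pred1 [tuple]) //.
by move=> s; rewrite /= [s]tuple0; apply/esym/eqP.
Qed.

Lemma sumT_cat (R : nmodType) m n (F : seq bool -> R) :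
  \sum_(s : (m + n).-tuple bool) F s =
  \sum_(s1 : m.-tuple bool) \sum_(s2 : n.-tuple bool) F (s1 ++ s2).
Proof.
elim: m F => [|m IH] F.
  by rewrite (@sumT0 _ (fun s1 => \sum_(s2 : n.-tuple bool) F (s1 ++ s2))).
apply: (etrans (@sumT_cons _ (m + n) F)); rewrite (@sumT_cons _ m (fun s1 => \sum_(s2 : n.-tuple bool) F (s1 ++ s2))).
by apply: eq_bigr => b _; rewrite (IH (fun s => F (b :: s))).
Qed.
Fixpoint goE (cs : seq rtree) (off : nat) : seq (nat * nat) :=
  match cs with
  | [::] => [::]
  | c :: cs' => (0%N, off) :: map (fun e => (e.1 + off, e.2 + off)%N) (tedges c)
                   ++ goE cs' (off + tsize c)%N
  end.

Lemma tedgesE cs : tedges (Node cs) = goE cs 1.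
Proof. rewrite /=; elim: cs 1%N => //= c cs IH off; by rewrite IH. Qed.

Fixpoint allT (P : rtree -> Prop) (cs : seq rtree) : Prop :=
  if cs is c :: cs' then P c /\ allT P cs' else True.

Fixpoint rtree_ind2 (P : rtree -> Prop)
  (H : forall cs, allT P cs -> P (Node cs)) (t : rtree) : P t :=
  match t with
  | Node cs => H cs ((fix F (cs : seq rtree) : allT P cs :=
       match cs return allT P cs with
       | [::] => I
       | c :: cs' => conj (@rtree_ind2 P H c) (F cs')
       end) cs)
  end.

Lemma tsize_gt0 t : (0 < tsize t)%N.
Proof. by case: t. Qed.

Lemma tedges_bound t : all (fun e => (e.1 < tsize t) && (e.2 < tsize t))%N (tedges t).
Proof.
elim/rtree_ind2: t => cs Hcs; rewrite tedgesE.
suff: forall off, (0 < off)%N -> all (fun e => (e.1 < off + sumn (map tsize cs)) && (e.2 < off + sumn (map tsize cs)))%N (goE cs off).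
  by move/(_ 1%N isT); rewrite /= add1n.
elim: cs Hcs => [|c cs IH] //= [Hc Hcs] off Hoff.
have Hc0 := tsize_gt0 c.
apply/andP; split; first by apply/andP; split; lia.
rewrite all_cat; apply/andP; split.
  rewrite all_map; apply/allP => e He /=.
  have /andP[h1 h2] := allP Hc e He.
  apply/andP; split; lia.
apply: sub_all (IH Hcs (off + tsize c)%N ltac:(lia)) => e /andP[h1 h2].
apply/andP; split; lia.
Qed.

Definition cntP (P : bool -> bool -> bool) (E : seq (nat * nat)) (s : seq bool) : nat :=
  count (fun e : nat * nat => P (nth false s e.1) (nth false s e.2)) E.
Definition P0 (a b : bool) := ~~ a && ~~ b.
Definition P1 (a b : bool) := a && b.

Definition gw (R : realFieldType) (be ga la : R) (t : rtree) (s : seq bool) : R :=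
  la ^+ count id s * be ^+ cntP P0 (tedges t) s * ga ^+ cntP P1 (tedges t) s.

Lemma gweightE (R : realFieldType) (be ga la : R) t (s : (tsize t).-tuple bool) :
  gweight be ga la s = gw be ga la t s.
Proof. by []. Qed.

Fixpoint ec (P : bool -> bool -> bool) (r : bool) (cs : seq rtree) (s : seq bool) : nat :=
  match cs with
  | [::] => 0%N
  | c :: cs' => (P r (nth false s 0) + cntP P (tedges c) (take (tsize c) s)
                 + ec P r cs' (drop (tsize c) s))%N
  end.

Lemma cnt_goE P cs off pre s :
  size pre = off -> (0 < off)%N -> (sumn (map tsize cs) <= size s)%N ->
  cntP P (goE cs off) (pre ++ s) = ec P (nth false pre 0) cs s.
Proof.
elim: cs off pre s => [|c cs IH] off pre s //= Hpre Hoff Hs.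
rewrite /cntP /= count_cat count_map.
have Hc0 := tsize_gt0 c.
rewrite nth_cat Hpre Hoff.
rewrite nth_cat Hpre ltnn subnn addnA.
congr (_ + _ + _)%N.
  apply: eq_in_count => e He /=.
  have /andP[h1 h2] := allP (tedges_bound c) e He.
  rewrite !nth_cat Hpre !ltnNge !leq_addl /= !addnK !nth_take //.
have -> : pre ++ s = (pre ++ take (tsize c) s) ++ drop (tsize c) s by rewrite -catA cat_take_drop.
rewrite /cntP in IH; rewrite IH //.
- by rewrite nth_cat Hpre Hoff.
- by rewrite size_cat size_take Hpre; case: ifP => // /negbT; rewrite -leqNgt; lia.
- by lia.
- by rewrite size_drop; lia.
Qed.

Definition ww (R : realFieldType) (be ga : R) (b b' : bool) : R :=
  if b then (if b' then ga else 1) else (if b' then 1 else be).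

Fixpoint fw (R : realFieldType) (be ga la : R) (b : bool) (cs : seq rtree) (s : seq bool) : R :=
  match cs with
  | [::] => 1
  | c :: cs' => ww be ga b (nth false s 0) * gw be ga la c (take (tsize c) s)
                * fw be ga la b cs' (drop (tsize c) s)
  end.

Lemma ww_exp (R : realFieldType) (be ga : R) b x :
  ww be ga b x = be ^+ P0 b x * ga ^+ P1 b x.
Proof. by case: b; case: x; rewrite /ww /P0 /P1 /= ?expr0 ?expr1 ?mulr1 ?mul1r. Qed.

Lemma fw_ec (R : realFieldType) (be ga la : R) b cs s :
  size s = sumn (map tsize cs) ->
  la ^+ count id s * be ^+ ec P0 b cs s * ga ^+ ec P1 b cs s = fw be ga la b cs s.
Proof.
elim: cs s => [|c cs IH] s /=.
  by move/size0nil ->; rewrite /= !expr0 !mulr1.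
move=> Hs.
rewrite -{1}(cat_take_drop (tsize c) s) count_cat.
rewrite -IH; last by rewrite size_drop Hs; lia.
rewrite /gw !exprD.
have -> : ww be ga b (nth false s 0) = be ^+ P0 b (nth false s 0) * ga ^+ P1 b (nth false s 0).
  by rewrite ww_exp.
ring.
Qed.

Lemma gw_node (R : realFieldType) (be ga la : R) b cs s :
  size s = sumn (map tsize cs) ->
  gw be ga la (Node cs) (b :: s) = la ^+ b * fw be ga la b cs s.
Proof.
move=> Hs.
rewrite -fw_ec // /gw tedgesE.
rewrite -[b :: s]/([:: b] ++ s).
rewrite !cnt_goE // ?Hs //=.
rewrite exprD; ring.
Qed.

Lemma sumT_root (R : nmodType) N b (G : seq bool -> R) :
  \sum_(s : N.+1.-tuple bool | nth false s 0 == b) G s = \sum_(s : N.-tuple bool) G (b :: s).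
Proof.
rewrite big_mkcond (@sumT_cons _ N (fun s => if nth false s 0 == b then G s else 0)).
rewrite big_bool /=.
by case: b => /=; rewrite big1_eq ?add0r ?addr0.
Qed.

Definition Zs (R : realFieldType) (be ga la : R) (t : rtree) (b : bool) : R :=
  \sum_(s : (tsize t).-tuple bool | nth false s 0 == b) gw be ga la t s.
Definition Ws (R : realFieldType) (be ga la : R) (t : rtree) (b : bool) : R :=
  \sum_(s : (tsize t).-tuple bool | nth false s 0 == b) (count id s)%:R * gw be ga la t s.
Definition Zc (R : realFieldType) (be ga la : R) (t : rtree) (b : bool) : R :=
  \sum_(b' : bool) ww be ga b b' * Zs be ga la t b'.
Definition Wc (R : realFieldType) (be ga la : R) (t : rtree) (b : bool) : R :=
  \sum_(b' : bool) ww be ga b b' * Ws be ga la t b'.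

Lemma Zc_alt (R : realFieldType) (be ga la : R) c b :
  \sum_(s : (tsize c).-tuple bool) ww be ga b (nth false s 0) * gw be ga la c s = Zc be ga la c b.
Proof.
case: c => cs.
rewrite (@sumT_cons _ (sumn (map tsize cs)) (fun s => ww be ga b (nth false s 0) * gw be ga la (Node cs) s)).
rewrite /Zc /Zs; apply: eq_bigr => b' _.
by rewrite sumT_root mulr_sumr.
Qed.

Lemma Wc_alt (R : realFieldType) (be ga la : R) c b :
  \sum_(s : (tsize c).-tuple bool) (count id s)%:R * (ww be ga b (nth false s 0) * gw be ga la c s)
  = Wc be ga la c b.
Proof.
case: c => cs.
rewrite (@sumT_cons _ (sumn (map tsize cs)) (fun s => (count id s)%:R * (ww be ga b (nth false s 0) * gw be ga la (Node cs) s))).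
rewrite /Wc /Ws; apply: eq_bigr => b' _.
rewrite (@sumT_root _ _ b' (fun s => (count id s)%:R * gw be ga la (Node cs) s)) mulr_sumr; apply: eq_bigr => s _ /=.
ring.
Qed.

Lemma fw_cat (R : realFieldType) (be ga la : R) b c cs s1 s2 :
  size s1 = tsize c ->
  fw be ga la b (c :: cs) (s1 ++ s2) =
  (ww be ga b (nth false s1 0) * gw be ga la c s1) * fw be ga la b cs s2.
Proof.
move=> H1 /=.
have Hc0 := tsize_gt0 c.
by rewrite nth_cat H1 Hc0 -H1 take_size_cat // drop_size_cat.
Qed.

Lemma forestZ (R : realFieldType) (be ga la : R) b cs :
  \sum_(s : (sumn (map tsize cs)).-tuple bool) fw be ga la b cs s
  = \prod_(c <- cs) Zc be ga la c b.
Proof.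
elim: cs => [|c cs IH].
  by rewrite big_nil (@sumT0 _ (fw be ga la b [::])).
apply: (etrans (@sumT_cat _ (tsize c) (sumn (map tsize cs)) (fw be ga la b (c :: cs)))).
rewrite big_cons -IH -Zc_alt mulr_suml.
apply: eq_bigr => s1 _.
rewrite mulr_sumr; apply: eq_bigr => s2 _.
by rewrite fw_cat // size_tuple.
Qed.

Lemma forestW (R : realFieldType) (be ga la : R) b cs :
  all (fun c => Zc be ga la c b != 0) cs ->
  \sum_(s : (sumn (map tsize cs)).-tuple bool) (count id s)%:R * fw be ga la b cs s
  = (\prod_(c <- cs) Zc be ga la c b) * \sum_(c <- cs) Wc be ga la c b / Zc be ga la c b.
Proof.
elim: cs => [|c cs IH].
  by rewrite big_nil (@sumT0 _ (fun s => (count id s)%:R * fw be ga la b [::] s)) /= mul0r big_nil mulr0.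
move=> /= /andP[Hc Hcs].
apply: (etrans (@sumT_cat _ (tsize c) (sumn (map tsize cs)) (fun s => (count id s)%:R * fw be ga la b (c :: cs) s))).
rewrite !big_cons.
have E : \sum_(s1 : (tsize c).-tuple bool) \sum_(s2 : (sumn (map tsize cs)).-tuple bool)
     (count id (s1 ++ s2))%:R * fw be ga la b (c :: cs) (s1 ++ s2)
   = (\sum_(s : (tsize c).-tuple bool) (count id s)%:R * (ww be ga b (nth false s 0) * gw be ga la c s))
       * (\sum_(s : (sumn (map tsize cs)).-tuple bool) fw be ga la b cs s)
     + (\sum_(s : (tsize c).-tuple bool) ww be ga b (nth false s 0) * gw be ga la c s)
       * (\sum_(s : (sumn (map tsize cs)).-tuple bool) (count id s)%:R * fw be ga la b cs s).
  rewrite !mulr_suml -big_split; apply: eq_bigr => s1 _.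
  rewrite !mulr_sumr -big_split; apply: eq_bigr => s2 _.
  rewrite fw_cat ?size_tuple // count_cat natrD; rewrite /=; ring.
rewrite E Wc_alt Zc_alt forestZ IH //.
field.
exact: Hc.
Qed.

Lemma ZsN (R : realFieldType) (be ga la : R) cs b :
  Zs be ga la (Node cs) b = la ^+ b * \prod_(c <- cs) Zc be ga la c b.
Proof.
apply: (etrans (@sumT_root _ (sumn (map tsize cs)) b (gw be ga la (Node cs)))).
rewrite -forestZ mulr_sumr; apply: eq_bigr => s _.
by rewrite gw_node // size_tuple.
Qed.

Lemma WsN (R : realFieldType) (be ga la : R) cs b :
  all (fun c => Zc be ga la c b != 0) cs ->
  Ws be ga la (Node cs) b = la ^+ b * \prod_(c <- cs) Zc be ga la c b
     * (b%:R + \sum_(c <- cs) Wc be ga la c b / Zc be ga la c b).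
Proof.
move=> H.
apply: (etrans (@sumT_root _ (sumn (map tsize cs)) b
   (fun s => (count id s)%:R * gw be ga la (Node cs) s))).
have E : \sum_(s : (sumn (map tsize cs)).-tuple bool)
   (count id (b :: s))%:R * gw be ga la (Node cs) (b :: s) =
   la ^+ b * (b%:R * \sum_(s : (sumn (map tsize cs)).-tuple bool) fw be ga la b cs s
      + \sum_(s : (sumn (map tsize cs)).-tuple bool) (count id s)%:R * fw be ga la b cs s).
  rewrite !mulr_sumr -big_split mulr_sumr; apply: eq_bigr => s _.
  rewrite gw_node ?size_tuple //= natrD /=; ring.
rewrite E forestZ forestW //; ring.
Qed.

Lemma Zc_gt0 (R : realFieldType) (be ga la : R) c b :
  0 <= be -> 0 <= ga -> 0 < Zs be ga la c false -> 0 < Zs be ga la c true ->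
  0 < Zc be ga la c b.
Proof.
move=> Hb Hg H0 H1; rewrite /Zc big_bool /=.
have := mulr_ge0 Hg (ltW H1); have := mulr_ge0 Hb (ltW H0).
case: b; rewrite /ww !mul1r; lra.
Qed.

Lemma Zs_gt0 (R : realFieldType) (be ga la : R) t :
  0 <= be -> 0 <= ga -> 0 < la -> forall b, 0 < Zs be ga la t b.
Proof.
move=> Hb Hg Hl.
elim/rtree_ind2: t => cs Hcs b.
rewrite ZsN; apply: mulr_gt0; first exact: exprn_gt0.
elim: cs Hcs => [|c cs IH] /=; first by rewrite big_nil.
case=> Hc Hcs.
rewrite big_cons; apply: mulr_gt0; last exact: IH.
exact: Zc_gt0.
Qed.

Lemma Zc_neq0 (R : realFieldType) (be ga la : R) c b :
  0 <= be -> 0 <= ga -> 0 < la -> Zc be ga la c b != 0.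
Proof.
move=> Hb Hg Hl; rewrite gt_eqF //; apply: Zc_gt0 => //; exact: Zs_gt0.
Qed.

Lemma all_Zc_neq0 (R : realFieldType) (be ga la : R) cs b :
  0 <= be -> 0 <= ga -> 0 < la -> all (fun c => Zc be ga la c b != 0) cs.
Proof. by move=> Hb Hg Hl; elim: cs => //= c cs ->; rewrite Zc_neq0. Qed.

Lemma ZpartE (R : realFieldType) (be ga la : R) t :
  Zpart be ga la t = Zs be ga la t true + Zs be ga la t false.
Proof.
rewrite /Zpart (bigID (fun s : (tsize t).-tuple bool => nth false s 0 == true)) /=.
congr (_ + _); apply: eq_bigl => s; by case: (nth false s 0).
Qed.

Lemma rootE (R : realFieldType) (be ga la : R) t b :
  root_prob be ga la t b = Zs be ga la t b / Zpart be ga la t.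
Proof. by rewrite /root_prob /gibbs /Zs mulr_suml. Qed.

Lemma condE (R : realFieldType) (be ga la : R) t b :
  0 <= be -> 0 <= ga -> 0 < la ->
  cond_mag be ga la t b = Ws be ga la t b / Zs be ga la t b.
Proof.
move=> Hb Hg Hl.
have Z0 := Zs_gt0 t Hb Hg Hl false; have Z1 := Zs_gt0 t Hb Hg Hl true.
have Hp : Zpart be ga la t != 0 by rewrite ZpartE gt_eqF //; lra.
rewrite /cond_mag rootE.
have -> : \sum_(s : (tsize t).-tuple bool | spin s 0 == b) (nspins s)%:R * gibbs be ga la s
   = Ws be ga la t b / Zpart be ga la t.
  by rewrite /Ws mulr_suml; apply: eq_bigr => s _; rewrite /gibbs mulrA.
have : Zs be ga la t b != 0 by case: b; rewrite gt_eqF.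
move=> Hz; field; by apply/andP.
Qed.

Lemma effE (R : realFieldType) (be ga la : R) t :
  0 <= be -> 0 <= ga -> 0 < la ->
  eff_field be ga la t = la^-1 * (Zs be ga la t true / Zs be ga la t false).
Proof.
move=> Hb Hg Hl.
have Z0 := Zs_gt0 t Hb Hg Hl false; have Z1 := Zs_gt0 t Hb Hg Hl true.
have Hp : Zpart be ga la t != 0 by rewrite ZpartE gt_eqF //; lra.
rewrite /eff_field !rootE; congr (_ * _).
have H0 : Zs be ga la t false != 0 by rewrite gt_eqF.
field; by apply/andP.
Qed.

Lemma effN (R : realFieldType) (be ga la : R) cs :
  0 <= be -> 0 <= ga -> 0 < la ->
  eff_field be ga la (Node cs) =
  \prod_(c <- cs) (Zc be ga la c true / Zc be ga la c false).
Proof.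
move=> Hb Hg Hl.
rewrite effE // !ZsN prodf_div expr1 expr0 mul1r.
have Hl0 : la != 0 by rewrite gt_eqF.
by rewrite -!mulrA mulKf.
Qed.

Lemma magN (R : realFieldType) (be ga la : R) cs :
  0 <= be -> 0 <= ga -> 0 < la ->
  mag_gap be ga la (Node cs) =
  1 + \sum_(c <- cs) (Wc be ga la c true / Zc be ga la c true
                      - Wc be ga la c false / Zc be ga la c false).
Proof.
move=> Hb Hg Hl.
rewrite /mag_gap !condE // !WsN ?all_Zc_neq0 //.
have Z0 := Zs_gt0 (Node cs) Hb Hg Hl false; have Z1 := Zs_gt0 (Node cs) Hb Hg Hl true.
rewrite !ZsN in Z0 Z1 *.
move: Z0 Z1; set A := _ * \prod_(c <- cs) _; set B := _ * \prod_(c <- cs) _ => Z0 Z1.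
rewrite big_split /= sumrN.
rewrite (mulrC A) (mulrC B) !mulfK ?gt_eqF //; ring.
Qed.

Lemma final_alg (R : realFieldType) (be ga la z0 z1 w0 w1 : R) :
  0 <= be -> 0 <= ga -> be * ga < 1 -> (be != 0 \/ ga != 0) -> 0 < la ->
  0 < z0 -> 0 < z1 ->
  let RT := (ga * z1 + z0) / (z1 + be * z0) in
  let E := la^-1 * (z1 / z0) in
  [/\ RT = (1 + ga * la * E) / (be + la * E),
      1 + ((ga * w1 + w0) / (ga * z1 + z0) - (w1 + be * w0) / (z1 + be * z0))
        = 1 - omega be ga RT * (w1 / z1 - w0 / z0),
      ga < RT /\ (be = 0 \/ RT < be^-1)
    & 0 < omega be ga RT < 1].
Proof.
move=> Hb Hg Hbg Hnz Hl H0 H1 RT E.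
have D1 : 0 < z1 + be * z0 by have := mulr_ge0 Hb (ltW H0); lra.
have D2 : 0 < ga * z1 + z0 by have := mulr_ge0 Hg (ltW H1); lra.
have D3 : 0 < 1 - be * ga by lra.
have n1 : z1 + be * z0 != 0 by rewrite gt_eqF.
have n2 : ga * z1 + z0 != 0 by rewrite gt_eqF.
have n3 : 1 - be * ga != 0 by rewrite gt_eqF.
have n0 : z0 != 0 by rewrite gt_eqF.
have n1' : z1 != 0 by rewrite gt_eqF.
have nl : la != 0 by rewrite gt_eqF.
have OM : omega be ga RT = z0 * z1 * (1 - be * ga) / ((ga * z1 + z0) * (z1 + be * z0)).
  rewrite /omega /RT; field.
  by rewrite n3 n1 n2.
split.
- rewrite /RT /E; field.
  by rewrite n0 nl addrC n1.
- rewrite OM; field.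
  by rewrite n0 n1' n1 n2.
- split.
    have -> : RT = ga + z0 * (1 - be * ga) / (z1 + be * z0) by rewrite /RT; field.
    have : 0 < z0 * (1 - be * ga) / (z1 + be * z0) by apply: divr_gt0 => //; apply: mulr_gt0.
    lra.
  have [->|Hb0] := eqVneq be 0; [by left | right].
  have Hbp : 0 < be by rewrite lt_def Hb0.
  have -> : be^-1 = RT + z1 * (1 - be * ga) / (be * (z1 + be * z0)) by rewrite /RT; field; rewrite Hb0 n1.
  have : 0 < z1 * (1 - be * ga) / (be * (z1 + be * z0)).
    by apply: divr_gt0; apply: mulr_gt0.
  lra.
- rewrite OM; apply/andP; split.
    by apply: divr_gt0; apply: mulr_gt0 => //; apply: mulr_gt0.
  rewrite ltr_pdivrMr; last exact: mulr_gt0.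
  rewrite mul1r.
  have : 0 < be * z0 * z0 + ga * z1 * z1.
    case: Hnz => Hn.
      have Hbp : 0 < be by rewrite lt_def Hn.
      have := mulr_ge0 (mulr_ge0 Hg (ltW H1)) (ltW H1).
      have := mulr_gt0 (mulr_gt0 Hbp H0) H0. lra.
    have Hgp : 0 < ga by rewrite lt_def Hn.
    have := mulr_gt0 (mulr_gt0 Hgp H1) H1.
    have := mulr_ge0 (mulr_ge0 Hb (ltW H0)) (ltW H0). lra.
  have := mulr_ge0 (mulr_ge0 (mulr_ge0 Hb Hg) (ltW H0)) (ltW H1).
  move=> h1 h2.
  have -> : (ga * z1 + z0) * (z1 + be * z0) = z0 * z1 * (1 - be * ga) + (be * z0 * z0 + ga * z1 * z1) + 2 * (be * ga * z0 * z1) by ring.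
  lra.
Qed.

Theorem lemma3p1 (R : realFieldType) (beta gamma lam : R) (Ts : seq rtree) :
  antiferro beta gamma -> 0 < lam ->
  let T := Node [:: Node (flatten (map children Ts))] in
  let RT := eff_field beta gamma lam T in
  let MT := mag_gap beta gamma lam T in
  [/\ RT = (1 + gamma * lam * \prod_(Ti <- Ts) eff_field beta gamma lam Ti)
           / (beta + lam * \prod_(Ti <- Ts) eff_field beta gamma lam Ti),
      MT = 1 - omega beta gamma RT
               * (1 + \sum_(Ti <- Ts) (mag_gap beta gamma lam Ti - 1)),
      gamma < RT /\ (beta = 0 \/ RT < beta^-1)
    & 0 < omega beta gamma RT < 1].
Proof.
move=> [Hb [Hg [Hbg Hnz]]] Hl T RT MT.
set U := Node (flatten (map children Ts)).
have effU : \prod_(Ti <- Ts) eff_field beta gamma lam Ti = eff_field beta gamma lam U.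
  rewrite /U effN // big_flatten big_map; apply: eq_bigr => -[cs] _.
  by rewrite effN.
have magU : 1 + \sum_(Ti <- Ts) (mag_gap beta gamma lam Ti - 1) = mag_gap beta gamma lam U.
  rewrite /U magN // big_flatten big_map; congr (1 + _); apply: eq_bigr => -[cs] _.
  by rewrite magN // addrC addKr.
rewrite effU magU.
have ER : RT = (gamma * Zs beta gamma lam U true + Zs beta gamma lam U false)
               / (Zs beta gamma lam U true + beta * Zs beta gamma lam U false).
  by rewrite /RT /T effN // big_seq1 /Zc !big_bool /ww /= !mul1r.
have EM : MT = 1 + ((gamma * Ws beta gamma lam U true + Ws beta gamma lam U false)
                      / (gamma * Zs beta gamma lam U true + Zs beta gamma lam U false)
                    - (Ws beta gamma lam U true + beta * Ws beta gamma lam U false)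
                      / (Zs beta gamma lam U true + beta * Zs beta gamma lam U false)).
  by rewrite /MT /T magN // big_seq1 /Wc /Zc !big_bool /ww /= !mul1r.
rewrite /mag_gap !condE // effE //.
have Z0 := Zs_gt0 U Hb Hg Hl false; have Z1 := Zs_gt0 U Hb Hg Hl true.
have := final_alg (Ws beta gamma lam U false) (Ws beta gamma lam U true) Hb Hg Hbg Hnz Hl Z0 Z1.
rewrite -ER -EM.

move=> [h1 h2 h3 h4]; split => //.
Qed.
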